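(* Let $S\subseteq\mathbb{R}^m$ be a condensed space and let $I\subseteq\mathscr{C}(S)[x_1,\dots,x_n]$ be a condensed ideal. Then $I$ is finitely generated.
   Context: $S\subseteq\mathbb{R}^m$ carries the Euclidean subspace topology; $\mathscr{C}(S)$ is the ring of continuous complex-valued functions on $S$. A polynomial function on $S$ is the restriction to $S$ of a polynomial in the $m$ real coordinates with complex coefficients; $\mathscr{P}(S)$ is the ring of these. A real algebraic subset of $S$ is the common zero set in $S$ of finitely many elements of $\mathscr{P}(S)$. $S$ is condensed if every real algebraic subset $V\subseteq S$ with $V\neq S$ is nowhere dense in $S$. $\mathscr{R}(S)=\{f/g: f,g\in\mathscr{P}(S),\ g \text{ has no zero on } S\}$. An ideal $I\subseteq\mathscr{C}(S)[x_1,\dots,x_n]$ is condensed if it is generated by some elements of $\mathscr{R}(S)[x_1,\dots,x_n]$. *)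

(* Defs.v *)
From HB Require Import structures.
From mathcomp Require Import all_boot all_order all_algebra.
From mathcomp Require Import reals.
From mathcomp Require Import complex.
From mathcomp Require Import mpoly.

Set Implicit Arguments. Unset Strict Implicit. Unset Printing Implicit Defensive.
Import Order.TTheory GRing.Theory Num.Theory.
Local Open Scope ring_scope.

Section CondensedDefs.
Variables (R : realType) (m n : nat).

Local Notation pt := 'rV[R]_m.
Local Notation C := (complex R).

Definition dist2 (x y : pt) : R := \sum_(i < m) (x 0 i - y 0 i) ^+ 2.

Definition pts (S : pt -> Prop) := {x : pt | S x}.

Definition cont_on (S : pt -> Prop) (f : pts S -> C) : Prop :=
  forall (p : pts S) (e : R), 0 < e ->
    exists2 d : R, 0 < d &
      forall q : pts S, dist2 (proj1_sig q) (proj1_sig p) < d ^+ 2 ->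
        `|f q - f p| < (e%:C)%C.

Definition peval (p : {mpoly C[m]}) (x : pt) : C :=
  p.@[fun i => ((x 0 i)%:C)%C].

Definition zero_set (S : pt -> Prop) (ps : seq {mpoly C[m]}) : pt -> Prop :=
  fun x => S x /\ (forall p, p \in ps -> peval p x = 0).

Definition rel_closure (S V : pt -> Prop) : pt -> Prop :=
  fun x => S x /\ forall e : R, 0 < e -> exists v, V v /\ dist2 v x < e ^+ 2.

Definition nowhere_dense_in (S V : pt -> Prop) : Prop :=
  ~ (exists p, S p /\ exists2 r : R, 0 < r &
       forall q, S q -> dist2 q p < r ^+ 2 -> rel_closure S V q).

Definition condensed (S : pt -> Prop) : Prop :=
  forall ps : seq {mpoly C[m]},
    ~ (forall x, zero_set S ps x <-> S x) -> nowhere_dense_in S (zero_set S ps).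

Definition rational_fun (S : pt -> Prop) (f : pts S -> C) : Prop :=
  exists (p q : {mpoly C[m]}),
    (forall x : pts S, peval q (proj1_sig x) != 0) /\
    (forall x : pts S, f x = peval p (proj1_sig x) / peval q (proj1_sig x)).

(* A polynomial in x_1..x_n with coefficients in a ring of functions S -> C is
   represented pointwise, as a map P : S -> C[x_1..x_n] with uniformly bounded
   degree; its coefficient at the monomial mon is s |-> (P s)@_mon. *)
Definition polyfun (S : pt -> Prop) := pts S -> {mpoly C[n]}.

Definition poly_over (S : pt -> Prop) (A : (pts S -> C) -> Prop)
    (P : polyfun S) : Prop :=
  (exists d : nat, forall s, (msize (P s) <= d)%N) /\
  (forall mon : 'X_{1..n}, A (fun s => (P s)@_mon)).

Definition CS_poly (S : pt -> Prop) := poly_over (@cont_on S).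
Definition RS_poly (S : pt -> Prop) := poly_over (@rational_fun S).

Definition ideal_gen (S : pt -> Prop) (G : polyfun S -> Prop)
    (P : polyfun S) : Prop :=
  exists (k : nat) (c g : 'I_k -> polyfun S),
    (forall i, CS_poly (c i)) /\ (forall i, G (g i)) /\
    (forall s, P s = \sum_(i < k) c i s * g i s).

Definition condensed_ideal (S : pt -> Prop) (I : polyfun S -> Prop) : Prop :=
  exists G : polyfun S -> Prop,
    (forall P, G P -> RS_poly P) /\ (forall P, I P <-> ideal_gen G P).

Definition fin_gen_ideal (S : pt -> Prop) (I : polyfun S -> Prop) : Prop :=
  exists (k : nat) (g : 'I_k -> polyfun S),
    (forall i, CS_poly (g i)) /\
    (forall P, I P <-> ideal_gen (fun Q => exists i, forall s, Q s = g i s) P).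

End CondensedDefs.

(* Main.v *)
Require Import Defs.
From mathcomp Require Import all_boot all_order all_algebra reals complex mpoly.
From mathcomp Require Import ring lra.
From Stdlib Require Import Classical ClassicalEpsilon FunctionalExtensionality.
Set Implicit Arguments. Unset Strict Implicit. Unset Printing Implicit Defensive.
Import Order.TTheory GRing.Theory Num.Theory.
Local Open Scope ring_scope.
Section Dickson.
Variable N : nat.
Implicit Types (M : 'X_{1..N} -> Prop).

Definition leC (C : seq 'I_N) (l x : 'X_{1..N}) := all (fun j => (l j <= x j)%N) C.

Lemma fchoice (A B : Type) (P : A -> B -> Prop) (b0 : B) :
  (forall a, exists b, P a b) -> exists f : A -> B, forall a, P a (f a).
Proof.
move=> H; exists (fun a => proj1_sig (constructive_indefinite_description _ (H a))).
by move=> a; case: (constructive_indefinite_description _ _).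
Qed.

Lemma dicksonC k : forall C : seq 'I_N, (size C <= k)%N -> forall M,
  exists L : seq (multinom N), (forall l, l \in L -> M l) /\
            (forall x, M x -> exists2 l, l \in L & leC C l x).
Proof.
elim: k => [|k IH] C hC M.
  have -> : C = [::] by case: C hC.
  case: (classic (exists x, M x)) => [[a Ma]|nM].
    exists [:: a]; split; first by move=> l; rewrite inE => /eqP ->.
    by move=> x _; exists a; rewrite ?inE.
  exists (@nil (multinom N)); split => // x Mx; case: nM; by exists x.
case: (classic (exists x, M x)) => [[a Ma]|nM]; last first.
  exists (@nil (multinom N)); split => // x Mx; case: nM; by exists x.
have H : forall i : 'I_N, forall v : nat, exists L : seq 'X_{1..N},
   (i \in C -> (forall l, l \in L -> M l /\ l i = v) /\
            (forall x, M x -> x i = v -> exists2 l, l \in L & leC (rem i C) l x)).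
  move=> i v; case: (boolP (i \in C)) => iC; last by exists [::].
  have hs : (size (rem i C) <= k)%N by rewrite size_rem //; case: (size C) hC.
  have [L [HL1 HL2]] := IH (rem i C) hs (fun x => M x /\ x i = v).
  by exists L => _; split => // x Mx xi; apply: HL2.
have [F0 HF0] := fchoice [::] (fun iv : 'I_N * nat => H iv.1 iv.2).
pose F i v := F0 (i, v).
have HF : forall i v, _ := fun i v => HF0 (i, v).
exists (a :: flatten [seq flatten [seq F i v | v <- iota 0 (a i)] | i <- C]).
split.
  move=> l; rewrite inE => /orP[/eqP -> //|/flatten_mapP [i iC /flatten_mapP [v _ lF]]].
  by have [/(_ _ lF) [] //] := HF i v iC.
move=> x Mx; case: (boolP (leC C a x)) => hax; first by exists a; rewrite ?inE ?eqxx.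
move: hax; rewrite /leC => /allPn [i iC]; rewrite -ltnNge => xi.
have [_ /(_ x Mx (erefl _)) [l lF hl]] := HF i (x i) iC.
have [/(_ _ lF) [_ li] _] := HF i (x i) iC.
exists l.
  rewrite inE; apply/orP; right; apply/flatten_mapP; exists i => //.
  by apply/flatten_mapP; exists (x i) => //; rewrite mem_iota add0n.
apply/allP => j jC; case: (eqVneq j i) => [->|ji]; first by rewrite li.
by move/allP: hl; apply; apply: rem_mem.
Qed.

Lemma dickson M : exists L : seq (multinom N), (forall l, l \in L -> M l) /\
            (forall x, M x -> exists2 l, l \in L & (l <= x)%MM).
Proof.
have hs : (size (enum 'I_N) <= N)%N by rewrite size_enum_ord.
have [L [H1 H2]] := @dicksonC N (enum 'I_N) hs M.
exists L; split => // x /H2 [l lL hl]; exists l => //.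
by apply/mnm_lepP => i; move/allP: hl; apply; rewrite mem_enum.
Qed.
End Dickson.
Section Hilbert.
Variables (K : fieldType) (N : nat).
Local Notation P := {mpoly K[N]}.

Definition genby (U : seq P) (p : P) :=
  exists cs : seq P, p = \sum_(k < size U) cs`_k * U`_k.

Lemma genby0 U : genby U 0.
Proof. by exists [::]; rewrite big1 // => k _; rewrite nth_nil mul0r. Qed.

Lemma genby_lin U a b r : genby U a -> genby U b -> genby U (a + r * b).
Proof.
move=> [ca ->] [cb ->].
exists (mkseq (fun k => ca`_k + r * cb`_k) (size U)).
rewrite mulr_sumr -big_split /=; apply: eq_bigr => k _.
by rewrite nth_mkseq // mulrDl mulrA.
Qed.

Lemma genby_mem U u : u \in U -> genby U u.
Proof.
move=> uU; exists (mkseq (fun k => (k == index u U)%:R) (size U)).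
have hi : (index u U < size U)%N by rewrite index_mem.
rewrite (bigD1 (Ordinal hi)) //= big1 ?addr0.
  by rewrite nth_mkseq // eqxx mul1r nth_index.
move=> k /eqP hk; rewrite nth_mkseq //.
have -> : (k == index u U :> nat) = false.
  by apply/negbTE/eqP => h; apply: hk; apply: val_inj.
by rewrite mul0r.
Qed.

Lemma genby_sub U V p : (forall u, u \in U -> genby V u) -> genby U p -> genby V p.
Proof.
move=> hUV [c ->]; apply: (big_rec (fun x => genby V x)); first exact: genby0.
move=> k x _ hx; rewrite addrC; apply: genby_lin => //.
by apply: hUV; apply: mem_nth.
Qed.

Lemma genby_catl U V p : genby U p -> genby (U ++ V) p.
Proof. by apply: genby_sub => u uU; apply: genby_mem; rewrite mem_cat uU. Qed.
Lemma genby_catr U V p : genby V p -> genby (U ++ V) p.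
Proof. by apply: genby_sub => u uU; apply: genby_mem; rewrite mem_cat uU orbT. Qed.

Lemma hilbert_ideal (J : P -> Prop) :
  J 0 -> (forall p q r, J p -> J q -> J (p + r * q)) ->
  exists H : seq P, (forall h, h \in H -> J h) /\ (forall p, J p -> genby H p).
Proof.
move=> J0 Jlin.
have [L [HL1 HL2]] := dickson (fun x => exists p, J p /\ p != 0 /\ mlead p = x).
have Hc : forall x : 'X_{1..N}, exists h : P,
   (exists p, J p /\ p != 0 /\ mlead p = x) -> J h /\ h != 0 /\ mlead h = x.
  move=> x; case: (classic (exists p, J p /\ p != 0 /\ mlead p = x)) => [[h hh]|nh].
    by exists h.
  by exists 0.
have [F HF] := fchoice 0 Hc.
exists (map F L); split.
  by move=> h /mapP [l /HL1 lL ->]; have [] := HF l lL.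
suff : forall x p, mlead p = x -> J p -> genby (map F L) p.
  by move=> H p; apply: H.
elim/(well_founded_ind (@ltom_wf N)) => x IH p hx Jp.
case: (eqVneq p 0) => [->|p0]; first exact: genby0.
have [l lL hl] := HL2 (mlead p) (ex_intro _ p (conj Jp (conj p0 (erefl _)))).
have [Jh [h0 hlh]] := HF l (HL1 l lL).
set h := F l in Jh h0 hlh.
set e := (mlead p - l)%MM.
set c := - (mleadc p / mleadc h).
set r : P := c *: 'X_[e].
set p' := p + r * h.
have Jp' : J p' by apply: Jlin.
have hX : ('X_[e] : P) != 0.
  by apply/eqP => /(congr1 (mcoeff e)); rewrite mcoeffX eqxx mcoeff0; apply/eqP; rewrite oner_eq0.
have hlead : mlead ('X_[e] * h) = mlead p.
  by rewrite mleadM // mleadXm hlh /e submK.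
have hrh : r * h = c *: ('X_[e] * h) by rewrite /r -scalerAl.
have hcoef : p'@_(mlead p) = 0.
  have hc2 : ('X_[e] * h)@_(mlead p) = mleadc h.
    by rewrite -hlead mleadM // mleadcM mleadXm mcoeffX eqxx mul1r.
  rewrite /p' hrh mcoeffD mcoeffZ hc2.
  by rewrite /c mulNr divfK ?subrr // mleadc_eq0.
have hgt : forall m, (mlead p < m)%O -> p'@_m = 0.
  move=> m hm; rewrite /p' hrh mcoeffD mcoeffZ !mcoeff_gt_mlead ?hlead //.
  by rewrite mulr0 addr0.
have Hp : p = p' + (- r) * h by rewrite /p' mulNr addrK.
rewrite Hp; apply: genby_lin; last first.
  by apply: genby_mem; apply/mapP; exists l.
case: (eqVneq p' 0) => [->|p'0]; first exact: genby0.
apply: (IH (mlead p')) => //.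
rewrite -hx; rewrite lt_neqAle; apply/andP; split.
  by apply/eqP => e'; move: (mlead_supp p'0); rewrite mcoeff_msupp e' hcoef eqxx.
rewrite leNgt; apply/negP => /hgt; apply/eqP.
by rewrite -mcoeff_msupp mlead_supp.
Qed.

Lemma hilbert_set (T : P -> Prop) :
  exists T0 : seq P, (forall t, t \in T0 -> T t) /\ (forall t, T t -> genby T0 t).
Proof.
pose J p := exists T0 : seq P, (forall t, t \in T0 -> T t) /\ genby T0 p.
have J0 : J 0 by exists [::]; split => //; exact: genby0.
have Jlin : forall p q r, J p -> J q -> J (p + r * q).
  move=> p q r [A [hA gA]] [B [hB gB]]; exists (A ++ B); split.
    by move=> t; rewrite mem_cat => /orP[/hA|/hB].
  by apply: genby_lin; [apply: genby_catl|apply: genby_catr].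
have [H [HH1 HH2]] := hilbert_ideal J0 Jlin.
have Hc : forall h : P, exists A : seq P, J h -> (forall t, t \in A -> T t) /\ genby A h.
  move=> h; case: (classic (J h)) => [[A hA]|nh]; first by exists A.
  by exists [::].
have [F HF] := fchoice [::] Hc.
exists (flatten (map F H)); split.
  by move=> t /flatten_mapP [h hH tF]; have [/(_ t tF)] := HF h (HH1 h hH).
move=> t Tt; apply: (genby_sub (U := H)); last first.
  apply: HH2; exists [:: t]; split; first by move=> u; rewrite inE => /eqP ->.
  by apply: genby_mem; rewrite inE.
move=> u uH; have [_ gu] := HF u (HH1 u uH); apply: genby_sub gu => v vF.
by apply: genby_mem; apply/flatten_mapP; exists u.
Qed.
End Hilbert.
Section Cont.
Variables (R : realType) (m : nat) (S : 'rV[R]_m -> Prop).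
Local Notation C := (complex R).
Local Notation T := (pts S).

Definition nc (z : C) : R := complex.Re `|z|.

Lemma ncE z : `|z| = ((nc z)%:C)%C.
Proof. by rewrite /nc normc_def. Qed.

Lemma nc_ge0 z : 0 <= nc z.
Proof. by rewrite -ler0c -ncE normr_ge0. Qed.

Lemma ncD x y : nc (x + y) <= nc x + nc y.
Proof. by rewrite -lecR rmorphD /= -!ncE ler_normD. Qed.

Lemma ncM x y : nc (x * y) = nc x * nc y.
Proof. by apply: complexI; rewrite rmorphM /= -!ncE normrM. Qed.

Lemma ncN x : nc (- x) = nc x.
Proof. by apply: complexI; rewrite -!ncE normrN. Qed.

Lemma ncV x : nc (x^-1) = (nc x)^-1.
Proof. by apply: complexI; rewrite fmorphV /= -!ncE normfV. Qed.

Lemma nc_eq0 x : (nc x == 0) = (x == 0).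
Proof.
apply/eqP/eqP => [h|->]; last by rewrite /nc normr0.
by apply/eqP; rewrite -normr_eq0 ncE h rmorph0.
Qed.

Lemma ncR (r : R) : nc ((r%:C)%C) = `|r|.
Proof. by rewrite /nc normc_def /= expr0n /= addr0 sqrtr_sqr. Qed.

Lemma ncB x y : nc (x - y) = nc (y - x).
Proof. by rewrite -ncN opprB. Qed.

Definition ccont (f : T -> C) := forall (p : T) (e : R), 0 < e ->
  exists2 d : R, 0 < d & forall q : T,
    dist2 (proj1_sig q) (proj1_sig p) < d ^+ 2 -> nc (f q - f p) < e.

Lemma cont_onE f : cont_on f <-> ccont f.
Proof.
split=> H p e e0; have [d d0 Hd] := H p e e0; exists d => // q /Hd.
  by rewrite ncE ltcR.
by rewrite ncE ltcR.
Qed.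

Lemma dmin (P1 P2 : R -> Prop) :
  (forall d d', 0 < d' -> d' <= d -> P1 d -> P1 d') ->
  (forall d d', 0 < d' -> d' <= d -> P2 d -> P2 d') ->
  (exists2 d, 0 < d & P1 d) -> (exists2 d, 0 < d & P2 d) ->
  exists2 d, 0 < d & P1 d /\ P2 d.
Proof.
move=> m1 m2 [d1 d10 h1] [d2 d20 h2].
exists (Num.min d1 d2); first by rewrite lt_min d10.
split; [apply: m1 h1|apply: m2 h2]; rewrite ?lt_min ?d10 ?d20 // ge_min lexx ?orbT //.
Qed.

Definition dprop (p : T) (Q : T -> Prop) (d : R) :=
  forall q : T, dist2 (proj1_sig q) (proj1_sig p) < d ^+ 2 -> Q q.

Lemma dprop_mono p Q d d' : 0 < d' -> d' <= d -> dprop p Q d -> dprop p Q d'.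
Proof.
move=> d'0 le H q hq; apply: H; apply: lt_le_trans hq _.
by rewrite lerXn2r // nnegrE ltW // (lt_le_trans d'0).
Qed.

Lemma dmin2 p (Q1 Q2 : T -> Prop) :
  (exists2 d, 0 < d & dprop p Q1 d) -> (exists2 d, 0 < d & dprop p Q2 d) ->
  exists2 d, 0 < d & dprop p (fun q => Q1 q /\ Q2 q) d.
Proof.
move=> h1 h2; have [d d0 [H1 H2]] := dmin (@dprop_mono p Q1) (@dprop_mono p Q2) h1 h2.
by exists d => // q hq; split; [apply: H1|apply: H2].
Qed.

Lemma ccont_const c : ccont (fun _ => c).
Proof. by move=> p e e0; exists 1 => // q _; rewrite subrr /nc normr0. Qed.

Lemma ccont_add f g : ccont f -> ccont g -> ccont (fun s => f s + g s).
Proof.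
move=> hf hg p e e0.
have e20 : 0 < e / 2 by rewrite divr_gt0.
have [d d0 H] := dmin2 (hf p _ e20) (hg p _ e20).
exists d => // q /H [h1 h2].
have -> : f q + g q - (f p + g p) = (f q - f p) + (g q - g p) by ring.
apply: le_lt_trans (ncD _ _) _; lra.
Qed.

Lemma ccont_mul f g : ccont f -> ccont g -> ccont (fun s => f s * g s).
Proof.
move=> hf hg p e e0.
set A := nc (f p); set B := nc (g p).
have A0 : 0 <= A by apply: nc_ge0.
have B0 : 0 <= B by apply: nc_ge0.
have e1 : 0 < e / (2 * (B + 1)) by rewrite divr_gt0 // mulr_gt0 //; lra.
have e2 : 0 < e / (2 * (A + 1)) by rewrite divr_gt0 // mulr_gt0 //; lra.
have [d d0 H] := dmin2 (hf p _ ltr01) (dmin2 (hf p _ e1) (hg p _ e2)).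
exists d => // q /H [h1 [h2 h3]].
move: h2 h3; rewrite !ltr_pdivlMr ?mulr_gt0 //; try lra.
move=> h2 h3.
have -> : f q * g q - f p * g p = f q * (g q - g p) + (f q - f p) * g p by ring.
apply: le_lt_trans (ncD _ _) _; rewrite !ncM.
have hfq : nc (f q) <= A + nc (f q - f p).
  by have := ncD (f p) (f q - f p); rewrite addrC subrK.
set a := nc (f q - f p) in h1 h2 hfq *.
set b := nc (g q - g p) in h3 *.
set F := nc (f q) in hfq *.
have a0 : 0 <= a by apply: nc_ge0.
have b0 : 0 <= b by apply: nc_ge0.
have F0 : 0 <= F by apply: nc_ge0.
have : F * b <= (A + 1) * b by apply: ler_wpM2r => //; lra.
nra.
Qed.

Lemma ccont_ext f g : (forall s, f s = g s) -> ccont f -> ccont g.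
Proof. by move=> H hf p e e0; have [d d0 Hd] := hf p e e0; exists d => // q; rewrite -!H; apply: Hd. Qed.

Lemma ccont_inv g : ccont g -> (forall s, g s != 0) -> ccont (fun s => (g s)^-1).
Proof.
move=> hg gn0 p e e0.
set B := nc (g p).
have B0 : 0 < B by rewrite lt_def nc_eq0 gn0 nc_ge0.
have e1 : 0 < B / 2 by rewrite divr_gt0.
have e2 : 0 < e * B * B / 2 by rewrite divr_gt0 // !mulr_gt0.
have [d d0 H] := dmin2 (hg p _ e1) (hg p _ e2).
exists d => // q /H [h1 h2].
move: h1 h2; rewrite !ltr_pdivlMr //; move=> h1 h2.
have -> : (g q)^-1 - (g p)^-1 = (g p - g q) / (g q * g p).
  by field; rewrite gn0 gn0.
rewrite ncM ncV ncM ncB.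
set b := nc (g q - g p) in h1 h2 *.
set G := nc (g q).
have hG : B <= G + b by have := ncD (g q) (g p - g q); rewrite addrC subrK ncB.
have b0 : 0 <= b by apply: nc_ge0.
have G0 : 0 < G by lra.
rewrite ltr_pdivrMr ?mulr_gt0 //.
have : 0 <= e * B * (G - B / 2) by rewrite !mulr_ge0 //; lra.
nra.
Qed.

Lemma ccont_coord (a : 'I_m) : ccont (fun s => ((proj1_sig s 0 a)%:C)%C).
Proof.
move=> p e e0; exists e => // q hq.
rewrite -rmorphB /= ncR.
set x := proj1_sig q 0 a - proj1_sig p 0 a.
have hx : x ^+ 2 <= dist2 (proj1_sig q) (proj1_sig p).
  rewrite /dist2 (bigD1 a) //= lerDl sumr_ge0 // => i _; exact: sqr_ge0.
have : x ^+ 2 < e ^+ 2 by apply: le_lt_trans hq.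
rewrite ltr_norml => h; apply/andP; split; nra.
Qed.

Lemma ccont_sum (I : Type) (r : seq I) (P : pred I) (F : I -> T -> C) :
  (forall i, ccont (F i)) -> ccont (fun s => \sum_(i <- r | P i) F i s).
Proof.
move=> hF; elim: r => [|i r IH].
  by apply: ccont_ext (ccont_const 0) => s; rewrite big_nil.
case: (boolP (P i)) => Pi.
  by apply: ccont_ext (ccont_add (hF i) IH) => s; rewrite big_cons Pi.
by apply: ccont_ext IH => s; rewrite big_cons (negbTE Pi).
Qed.

Lemma ccont_prod (I : Type) (r : seq I) (P : pred I) (F : I -> T -> C) :
  (forall i, ccont (F i)) -> ccont (fun s => \prod_(i <- r | P i) F i s).
Proof.
move=> hF; elim: r => [|i r IH].
  by apply: ccont_ext (ccont_const 1) => s; rewrite big_nil.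
case: (boolP (P i)) => Pi.
  by apply: ccont_ext (ccont_mul (hF i) IH) => s; rewrite big_cons Pi.
by apply: ccont_ext IH => s; rewrite big_cons (negbTE Pi).
Qed.

Lemma ccont_exp f k : ccont f -> ccont (fun s => f s ^+ k).
Proof.
move=> hf; elim: k => [|k IH].
  by apply: ccont_ext (ccont_const 1) => s; rewrite expr0.
by apply: ccont_ext (ccont_mul hf IH) => s; rewrite exprS.
Qed.

Lemma ccont_peval (p : {mpoly C[m]}) : ccont (fun s => peval p (proj1_sig s)).
Proof.
elim/mpolyind: p => [|c M p _ _ IH].
  by apply: ccont_ext (ccont_const 0) => s; rewrite /peval meval0.
have h1 := ccont_prod (index_enum 'I_m) xpredT (fun i => ccont_exp (M i) (ccont_coord i)).
have h2 := ccont_add (ccont_mul (ccont_const c) h1) IH.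
apply: ccont_ext h2 => s.
by rewrite /peval mevalD mevalZ mevalX.
Qed.

Lemma ccont_rat f : rational_fun f -> ccont f.
Proof.
move=> [p [q [hq hf]]].
apply: ccont_ext (ccont_mul (ccont_peval p) (ccont_inv (ccont_peval q) hq)).
by move=> s; rewrite hf.
Qed.
End Cont.
Section CSpoly.
Variables (R : realType) (m n : nat) (S : 'rV[R]_m -> Prop).
Local Notation C := (complex R).
Local Notation T := (pts S).
Local Notation PF := (polyfun n S).

Lemma CS_E (P : PF) : CS_poly P <->
  (exists d, forall s, (msize (P s) <= d)%N) /\ (forall mon, ccont (fun s => (P s)@_mon)).
Proof.
split=> [[h1 h2]|[h1 h2]]; split=> // mon; first by apply/cont_onE.
by apply/cont_onE.
Qed.

Lemma CS_ext (P Q : PF) : (forall s, P s = Q s) -> CS_poly P -> CS_poly Q.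
Proof.
move=> H /CS_E [[d hd] hc]; apply/CS_E; split.
  by exists d => s; rewrite -H.
by move=> mon; apply: ccont_ext (hc mon) => s; rewrite H.
Qed.

Lemma CS_add (P Q : PF) : CS_poly P -> CS_poly Q -> CS_poly (fun s => P s + Q s).
Proof.
move=> /CS_E [[d1 h1] c1] /CS_E [[d2 h2] c2]; apply/CS_E; split.
  exists (maxn d1 d2) => s; apply: leq_trans (msizeD_le _ _) _.
  by rewrite geq_max !leq_max h1 h2 orbT.
move=> mon; apply: ccont_ext (ccont_add (c1 mon) (c2 mon)) => s.
by rewrite mcoeffD.
Qed.

Lemma CS_mul (P Q : PF) : CS_poly P -> CS_poly Q -> CS_poly (fun s => P s * Q s).
Proof.
move=> /CS_E [[d1 h1] c1] /CS_E [[d2 h2] c2]; apply/CS_E; split.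
  exists (d1 + d2).+1 => s; apply: leq_trans (msizeM_le _ _) _.
  by rewrite ltnS leq_add.
move=> mon.
have h := ccont_sum (index_enum _) (fun k : 'X_{1..n < (mdeg mon).+1, (mdeg mon).+1} => mon == (k.1 + k.2)%MM)
   (fun k => ccont_mul (c1 k.1) (c2 k.2)).
by apply: ccont_ext h => s; rewrite mcoeffM.
Qed.

Lemma CS_const (p : {mpoly C[n]}) : CS_poly (fun _ : T => p).
Proof.
apply/CS_E; split; first by exists (msize p).
by move=> mon; apply: ccont_const.
Qed.

Lemma CS_C (f : T -> C) : ccont f -> CS_poly (fun s => (f s)%:MP_[n]).
Proof.
move=> hf; apply/CS_E; split.
  by exists 1%N => s; rewrite msizeC; case: (_ != _).
move=> mon; apply: ccont_ext (ccont_mul hf (ccont_const ((mon == 0%MM)%:R))) => s.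
by rewrite mcoeffC.
Qed.

Lemma CS_sum (I : Type) (r : seq I) (Pr : pred I) (F : I -> PF) :
  (forall i, CS_poly (F i)) -> CS_poly (fun s => \sum_(i <- r | Pr i) F i s).
Proof.
move=> hF; elim: r => [|i r IH].
  by apply: CS_ext (CS_const 0) => s; rewrite big_nil.
case: (boolP (Pr i)) => Pi.
  by apply: CS_ext (CS_add (hF i) IH) => s; rewrite big_cons Pi.
by apply: CS_ext IH => s; rewrite big_cons (negbTE Pi).
Qed.

Lemma CS_prod (I : Type) (r : seq I) (Pr : pred I) (F : I -> PF) :
  (forall i, CS_poly (F i)) -> CS_poly (fun s => \prod_(i <- r | Pr i) F i s).
Proof.
move=> hF; elim: r => [|i r IH].
  by apply: CS_ext (CS_const 1) => s; rewrite big_nil.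
case: (boolP (Pr i)) => Pi.
  by apply: CS_ext (CS_mul (hF i) IH) => s; rewrite big_cons Pi.
by apply: CS_ext IH => s; rewrite big_cons (negbTE Pi).
Qed.

Lemma CS_exp (P : PF) k : CS_poly P -> CS_poly (fun s => P s ^+ k).
Proof.
move=> hP; elim: k => [|k IH].
  by apply: CS_ext (CS_const 1) => s; rewrite expr0.
by apply: CS_ext (CS_mul hP IH) => s; rewrite exprS.
Qed.

Lemma RS_CS (P : PF) : RS_poly P -> CS_poly P.
Proof.
move=> [h1 h2]; apply/CS_E; split => // mon; exact: ccont_rat.
Qed.
End CSpoly.
Lemma mmap_ext (k : nat) (A : nzRingType) (B : nzRingType) (f1 f2 : A -> B) (h1 h2 : 'I_k -> B) p :
  f1 =1 f2 -> h1 =1 h2 -> mmap f1 h1 p = mmap f2 h2 p.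
Proof.
move=> ef eh; rewrite /mmap; apply: eq_bigr => M _; rewrite ef; congr (_ * _).
exact: mmap1_eq.
Qed.

Lemma mmap_comp (k : nat) (A0 : nzRingType) (A B : comNzRingType) (g : {rmorphism A -> B})
   (f : A0 -> A) (h : 'I_k -> A) p :
  g (mmap f h p) = mmap (g \o f) (g \o h) p.
Proof.
rewrite /mmap rmorph_sum; apply: eq_bigr => M _; rewrite rmorphM /mmap1 rmorph_prod.
by congr (_ * _); apply: eq_bigr => i _; rewrite rmorphXn.
Qed.

Lemma split_l (a b : nat) (i : 'I_a) : split (lshift b i) = inl i.
Proof. exact: (unsplitK (inl i : 'I_a + 'I_b)). Qed.
Lemma split_r (a b : nat) (i : 'I_b) : split (rshift a i) = inr i.
Proof. exact: (unsplitK (inr i : 'I_a + 'I_b)). Qed.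

Section Maps.
Variables (R : realType) (m n : nat) (S : 'rV[R]_m -> Prop).
Local Notation C := (complex R).
Local Notation T := (pts S).
Local Notation PF := (polyfun n S).

Definition lf (x : 'rV[R]_m) (i : 'I_(m + n)) : {mpoly C[n]} :=
  match split i with inl a => (((x 0 a)%:C)%C)%:MP | inr b => 'X_b end.

Definition phi (x : 'rV[R]_m) (a : {mpoly C[m + n]}) : {mpoly C[n]} :=
  mmap (@mpolyC n C) (lf x) a.

Lemma phiD x a b : phi x (a + b) = phi x a + phi x b.
Proof. exact: rmorphD. Qed.
Lemma phiM x a b : phi x (a * b) = phi x a * phi x b.
Proof. exact: rmorphM. Qed.

Lemma phiX x i : phi x 'X_i = lf x i.
Proof. by rewrite /phi mmapX mmap1U. Qed.

Lemma phiC x c : phi x c%:MP = c%:MP.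
Proof. by rewrite /phi mmapC. Qed.

Lemma CS_lf i : CS_poly (fun s : T => lf (proj1_sig s) i).
Proof.
rewrite /lf; case: (split i) => [a|b]; last exact: CS_const.
apply: CS_C; exact: ccont_coord.
Qed.

Lemma CS_phi a : CS_poly (fun s : T => phi (proj1_sig s) a).
Proof.
elim/mpolyind: a => [|c M p _ _ IH].
  by apply: CS_ext (CS_const S (0 : {mpoly C[n]})) => s; rewrite /phi mmap0.
have h1 := CS_prod (index_enum 'I_(m + n)) xpredT (fun i => CS_exp (M i) (CS_lf i)).
have h2 := CS_add (CS_mul (CS_const S (c%:MP)) h1) IH.
apply: CS_ext h2 => s.
by rewrite /phi mmapD mmapZ mmapX.
Qed.

Definition Ly (r : {mpoly C[m]}) : {mpoly C[m + n]} :=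
  mmap (@mpolyC (m + n) C) (fun a : 'I_m => 'X_(lshift n a)) r.

Definition Lx (mon : 'X_{1..n}) : {mpoly C[m + n]} :=
  mmap1 (fun j : 'I_n => 'X_(rshift m j)) mon.

Lemma phi_Ly x r : phi x (Ly r) = (peval r x)%:MP.
Proof.
rewrite /phi /Ly mmap_comp /peval.
have -> : (r.@[fun i => ((x 0 i)%:C)%C])%:MP = mpolyC n (mmap idfun (fun i => ((x 0 i)%:C)%C) r) by [].
rewrite (mmap_comp (@mpolyC n C)).
apply: mmap_ext => [c|a] /=; first by rewrite mmapC.
by rewrite mmapX mmap1U /lf split_l.
Qed.

Lemma phi_Lx x mon : phi x (Lx mon) = 'X_[mon].
Proof.
rewrite /Lx /mmap1 /phi rmorph_prod mpolyXE_id; apply: eq_bigr => j _.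
by rewrite rmorphXn /= -/(phi x _) phiX /lf split_r.
Qed.
End Maps.
Section Num.
Variables (R : realType) (m n : nat) (S : 'rV[R]_m -> Prop).
Local Notation C := (complex R).
Local Notation T := (pts S).
Local Notation PF := (polyfun n S).

Lemma pevalM (p q : {mpoly C[m]}) x : peval (p * q) x = peval p x * peval q x.
Proof. by rewrite /peval mevalM. Qed.

Lemma peval_prod (I : Type) (r : seq I) (Pr : pred I) (F : I -> {mpoly C[m]}) x :
  peval (\prod_(i <- r | Pr i) F i) x = \prod_(i <- r | Pr i) peval (F i) x.
Proof.
elim: r => [|i r IH]; first by rewrite !big_nil /peval meval1.
by rewrite !big_cons; case: (Pr i); rewrite ?pevalM IH.
Qed.

Lemma num_exists (P : PF) : RS_poly P -> exists (a : {mpoly C[m + n]}) (u : {mpoly C[m]}),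
  (forall s : T, peval u (proj1_sig s) != 0) /\
  (forall s : T, phi (proj1_sig s) a = (peval u (proj1_sig s))%:MP * P s).
Proof.
move=> [[d hd] hr].
have Hc : forall mon : 'X_{1..n < d}, exists pq : {mpoly C[m]} * {mpoly C[m]},
   (forall x : T, peval pq.2 (proj1_sig x) != 0) /\
   (forall x : T, (P x)@_mon = peval pq.1 (proj1_sig x) / peval pq.2 (proj1_sig x)).
  move=> mon; have [p [q [h1 h2]]] := hr mon; by exists (p, q).
have [F HF] := fchoice (0, 0) Hc.
exists (\sum_(mon : 'X_{1..n < d}) Ly n ((F mon).1 * \prod_(mon' | mon' != mon) (F mon').2) * Lx R m mon).
exists (\prod_(mon : 'X_{1..n < d}) (F mon).2).
split.
  move=> s; rewrite peval_prod; apply/prodf_neq0 => mon _; exact: (HF mon).1.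
move=> s.
rewrite (mpolywE (hd s)) mul_mpolyC scaler_sumr /phi rmorph_sum.
apply: eq_bigr => mon _ /=.
rewrite rmorphM /= -/(phi _ _) -/(phi _ _) phi_Ly phi_Lx mul_mpolyC scalerA; congr (_ *: _).
rewrite (HF mon).2 pevalM !peval_prod [in RHS](bigD1 mon) //=.
by field; exact: (HF mon).1.
Qed.
End Num.
Unset Implicit Arguments.

Theorem mainTheorem5 (R : realType) (m n : nat) (S : 'rV[R]_m -> Prop)
    (I : polyfun n S -> Prop) :
  condensed S -> condensed_ideal I -> fin_gen_ideal I.
Proof.
move=> _ [G [GRS HI]].
pose PF := polyfun n S.
have Hn : forall P : PF, exists au : {mpoly (complex R)[m + n]} * {mpoly (complex R)[m]},
    G P -> (forall s : pts S, peval au.2 (proj1_sig s) != 0) /\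
    (forall s : pts S, phi (proj1_sig s) au.1 = (peval au.2 (proj1_sig s))%:MP * P s).
  move=> P; case: (classic (G P)) => [GP|nG]; last by exists (0, 0).
  have [a [u hau]] := num_exists (GRS P GP); by exists (a, u).
have [NU HNU] := fchoice (0, 0) Hn.
pose T x := exists P, G P /\ x = (NU P).1.
have [T0 [HT1 HT2]] := hilbert_set T.
have Hp : forall t, exists P : PF, t \in T0 -> G P /\ t = (NU P).1.
  move=> t; case: (boolP (t \in T0)) => tT; last by exists (fun _ => 0).
  by have [P hP] := HT1 t tT; exists P.
have [PI HPI] := fchoice (fun _ => 0) Hp.
pose k := size T0.
pose g : 'I_k -> PF := fun i => PI (T0`_i).
have Gg : forall i, G (g i).
  by move=> i; have [] := HPI (T0`_i) (mem_nth 0 (ltn_ord i)).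
have Tg : forall i : 'I_k, T0`_i = (NU (g i)).1.
  by move=> i; have [] := HPI (T0`_i) (mem_nth 0 (ltn_ord i)).
have key : forall P : PF, G P -> exists c : 'I_k -> PF,
    (forall i, CS_poly (c i)) /\ (forall s, P s = \sum_(i < k) c i s * g i s).
  move=> P GP.
  have [cs hcs] := HT2 (NU P).1 (ex_intro _ P (conj GP (erefl _))).
  have [hu hP] := HNU P GP.
  exists (fun (i : 'I_k) (s : pts S) => phi (proj1_sig s) cs`_i *
     ((peval (NU (g i)).2 (proj1_sig s) / peval (NU P).2 (proj1_sig s))%:MP)).
  split.
    move=> i; apply: CS_mul; first exact: CS_phi.
    apply: CS_C; apply: ccont_mul; first exact: ccont_peval.
    by apply: ccont_inv => //; exact: ccont_peval.
  move=> s.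
  have e1 := hP s; rewrite hcs /phi rmorph_sum in e1.
  have -> : P s = ((peval (NU P).2 (proj1_sig s))^-1)%:MP *
              ((peval (NU P).2 (proj1_sig s))%:MP * P s).
    by rewrite mulrA -mpolyCM mulVf ?hu // mpolyC1 mul1r.
  rewrite -e1 mulr_sumr; apply: eq_bigr => i _.
  rewrite rmorphM /= -!/(phi _ _) Tg (HNU (g i) (Gg i)).2 mpolyCM.
  by rewrite !mulrA [_ * phi _ _]mulrC -!mulrA; congr (_ * _); rewrite mulrCA.
exists k, g; split.
  by move=> i; apply: RS_CS; apply: GRS; apply: Gg.
move=> P; split.
  move=> /HI [k' [c [g' [hc [hg' hP]]]]].
  have hk : forall j, exists r : 'I_k -> PF, G (g' j) ->
      (forall i, CS_poly (r i)) /\ (forall s, g' j s = \sum_(i < k) r i s * g i s).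
    move=> j; have [r hr] := key (g' j) (hg' j); by exists r.
  have [Rj HRj] := fchoice (fun _ _ => 0) hk.
  exists k, (fun i s => \sum_(j < k') c j s * Rj j i s), g; split.
    move=> i; apply: CS_sum => j; apply: CS_mul; first exact: hc.
    by have [] := HRj j (hg' j).
  split; first by move=> i; exists i.
  move=> s; rewrite hP.
  under eq_bigr => j _ do rewrite ((HRj j (hg' j)).2 s) mulr_sumr.
  rewrite exchange_big /=; apply: eq_bigr => i _.
  by rewrite mulr_suml; apply: eq_bigr => j _; rewrite mulrA.
move=> [k' [c [g' [hc [hg' hP]]]]]; apply/HI.
exists k', c, g'; split => //; split => // j.
have [i hi] := hg' j.
have -> : g' j = g i by apply: functional_extensionality.
exact: Gg.
Qed.
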